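(* Let $\mathfrak g$ be a Lie algebra and $r_1,r_2\in\wedge^2\mathfrak g$ skew-symmetric $r$-matrices, with induced triangular Lie bialgebras $(\mathfrak g,[\cdot,\cdot],\delta_1)$ and $(\mathfrak g,[\cdot,\cdot],\delta_2)$, $\delta_i(x)=[x,r_i]$. If $(\phi,\varphi)$ is a weak homomorphism (resp. weak isomorphism) from $r_2$ to $r_1$, then $(\phi,\varphi)$ is a weak homomorphism (resp. weak isomorphism) from the Lie bialgebra $(\mathfrak g,[\cdot,\cdot],\delta_2)$ to $(\mathfrak g,[\cdot,\cdot],\delta_1)$.
   Context: A skew-symmetric $r$-matrix is $r\in\wedge^2\mathfrak g$ with $[r,r]=0$ (Gerstenhaber bracket on $\wedge^\bullet\mathfrak g$); $r^\sharp:\mathfrak g^*\to\mathfrak g$, $\langle r^\sharp\xi,\eta\rangle=\langle r,\xi\otimes\eta\rangle$. The triangular Lie bialgebra has cobracket $\delta(x)=[x,r]\in\wedge^2\mathfrak g$, whose dual Lie algebra structure on $\mathfrak g^*$ is $[\xi,\eta]_r=\mathrm{ad}^*_{r^\sharp\xi}\eta-\mathrm{ad}^*_{r^\sharp\eta}\xi$ with $\langle\mathrm{ad}^*_x\xi,y\rangle=-\langle\xi,[x,y]\rangle$. A weak homomorphism from $r_2$ to $r_1$ is a pair of a Lie algebra homomorphism $\phi:\mathfrak g\to\mathfrak g$ and a linear map $\varphi:\mathfrak g\to\mathfrak g$ with $(\varphi\otimes\mathrm{Id}_{\mathfrak g})(r_1)=(\mathrm{Id}_{\mathfrak g}\otimes\phi)(r_2)$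 and $\varphi[\phi(x),y]=[x,\varphi(y)]$ for all $x,y$; weak isomorphism if $\phi,\varphi$ are also linear isomorphisms. A weak homomorphism from the Lie bialgebra $(\mathfrak g,[\cdot,\cdot],\delta_2)$ to $(\mathfrak g,[\cdot,\cdot],\delta_1)$ is a pair of a Lie algebra homomorphism $\phi:\mathfrak g\to\mathfrak g$ and a linear $\varphi:\mathfrak g\to\mathfrak g$ such that $\varphi^*:(\mathfrak g^*,[\cdot,\cdot]_{r_2})\to(\mathfrak g^*,[\cdot,\cdot]_{r_1})$ is a Lie algebra homomorphism and $\varphi[\phi(x),y]=[x,\varphi(y)]$ for all $x,y\in\mathfrak g$; a weak isomorphism if moreover $\phi,\varphi$ are linear isomorphisms. *)

(* Defs.v *)
(* Finite-dimensional Lie algebra g over a field K, modelled in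
   coordinates: g = K^n as row vectors 'rV[K]_n with standard basis e_i, the bracket
   an arbitrary Lie bracket (bilinear, alternating, Jacobi).  g* is also 'rV[K]_n with
   the standard pairing <xi, x> = sum_i xi_i x_i (dual basis).  Tensors in g (x) g are
   n x n matrices t = sum_{ij} t_ij e_i (x) e_j; 3-tensors are functions
   'I_n -> 'I_n -> 'I_n -> K. *)
From HB Require Import structures.
From mathcomp Require Import all_boot all_order all_algebra.
Set Implicit Arguments.
Unset Strict Implicit.
Unset Printing Implicit Defensive.
Import Order.TTheory GRing.Theory Num.Theory.
Local Open Scope ring_scope.

Section LieDefs.
Variables (K : fieldType) (n : nat).
Local Notation V := 'rV[K]_n.

Definition ebas (i : 'I_n) : V := delta_mx 0 i.

Definition lin (f : V -> V) : Prop :=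
  forall (a : K) (x y : V), f (a *: x + y) = a *: f x + f y.

Definition is_lie (br : V -> V -> V) : Prop :=
  [/\ forall z, lin (fun x => br x z),
      forall z, lin (fun y => br z y),
      forall x, br x x = 0 &
      forall x y z, br x (br y z) + br y (br z x) + br z (br x y) = 0].

Definition lie_hom (br1 br2 : V -> V -> V) (f : V -> V) : Prop :=
  lin f /\ forall x y, f (br1 x y) = br2 (f x) (f y).

Definition pair (xi x : V) : K := \sum_(i < n) xi 0 i * x 0 i.

Definition tens (u v : V) : 'M[K]_n := \matrix_(a, b) (u 0 a * v 0 b).

Definition tmap (f g : V -> V) (t : 'M[K]_n) : 'M[K]_n :=
  \sum_(i < n) \sum_(j < n) t i j *: tens (f (ebas i)) (g (ebas j)).

(* skew-symmetric 2-tensors = wedge^2 g (x /\ y := x (x) y - y (x) x) *)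
Definition skew (r : 'M[K]_n) : Prop := r^T = - r.

Definition t3 (x y z : V) (a b c : 'I_n) : K := x 0 a * y 0 b * z 0 c.
Definition wedge3 (x y z : V) (a b c : 'I_n) : K :=
  t3 x y z a b c - t3 x z y a b c - t3 y x z a b c
  + t3 y z x a b c + t3 z x y a b c - t3 z y x a b c.

(* Gerstenhaber (Schouten) bracket of two decomposable bivectors:
   [x1/\x2, y1/\y2] = sum_{i,j} (-1)^{i+j} [xi,yj] /\ x_i^ /\ y_j^ *)
Definition sch22 (br : V -> V -> V) (x1 x2 y1 y2 : V) (a b c : 'I_n) : K :=
  wedge3 (br x1 y1) x2 y2 a b c - wedge3 (br x1 y2) x2 y1 a b c
  - wedge3 (br x2 y1) x1 y2 a b c + wedge3 (br x2 y2) x1 y1 a b c.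

(* [r, r] for skew r = sum_{i<j} r_ij e_i /\ e_j *)
Definition schouten (br : V -> V -> V) (r : 'M[K]_n) (a b c : 'I_n) : K :=
  \sum_(i < n) \sum_(j < n | (i < j)%N) \sum_(k < n) \sum_(l < n | (k < l)%N)
     r i j * r k l * sch22 br (ebas i) (ebas j) (ebas k) (ebas l) a b c.

Definition r_matrix (br : V -> V -> V) (r : 'M[K]_n) : Prop :=
  skew r /\ forall a b c, schouten br r a b c = 0.

(* r^sharp : g* -> g, <r^sharp xi, eta> = <r, xi (x) eta> *)
Definition rsharp (r : 'M[K]_n) (xi : V) : V := xi *m r.

Definition adstar (br : V -> V -> V) (x xi : V) : V :=
  \row_a (- pair xi (br x (ebas a))).

Definition rbr (br : V -> V -> V) (r : 'M[K]_n) (xi eta : V) : V :=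
  adstar br (rsharp r xi) eta - adstar br (rsharp r eta) xi.

Definition dualmap (f : V -> V) (xi : V) : V := \row_a pair xi (f (ebas a)).

Definition weak_hom_r (br : V -> V -> V) (r1 r2 : 'M[K]_n) (phi vphi : V -> V) : Prop :=
  [/\ lie_hom br br phi, lin vphi,
      tmap vphi id r1 = tmap id phi r2 &
      forall x y, vphi (br (phi x) y) = br x (vphi y)].

Definition weak_iso_r br r1 r2 (phi vphi : V -> V) : Prop :=
  [/\ weak_hom_r br r1 r2 phi vphi, bijective phi & bijective vphi].

(* weak homomorphism from the Lie bialgebra (g,[,],delta_2) to (g,[,],delta_1),
   where the dual Lie algebra of delta_i is (g*, [,]_{r_i}) *)
Definition weak_hom_bialg (br : V -> V -> V) (r1 r2 : 'M[K]_n) (phi vphi : V -> V) : Prop :=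
  [/\ lie_hom br br phi, lin vphi,
      lie_hom (rbr br r2) (rbr br r1) (dualmap vphi) &
      forall x y, vphi (br (phi x) y) = br x (vphi y)].

Definition weak_iso_bialg br r1 r2 (phi vphi : V -> V) : Prop :=
  [/\ weak_hom_bialg br r1 r2 phi vphi, bijective phi & bijective vphi].

End LieDefs.

(* Main.v *)
Require Import Defs.
From HB Require Import structures.
From mathcomp Require Import all_boot all_order all_algebra.
Set Implicit Arguments.
Unset Strict Implicit.
Unset Printing Implicit Defensive.
Import Order.TTheory GRing.Theory Num.Theory.
Local Open Scope ring_scope.

Section Aux.
Variables (K : fieldType) (n : nat).
Local Notation V := 'rV[K]_n.

Definition mxof (f : V -> V) : 'M[K]_n := \matrix_(i < n) f (@ebas K n i).

Lemma lin0 (f : V -> V) : lin f -> f 0 = 0.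
Proof.
move=> H; have E := H 1 0 0; rewrite !scale1r addr0 in E.
rewrite -{1}[f 0]addr0 in E.
by have := congr1 (fun z => - f 0 + z) E; rewrite /= !addKr => E0; exact: esym E0.
Qed.

Lemma lin_mx (f : V -> V) : lin f -> forall x, f x = x *m mxof f.
Proof.
move=> H x; rewrite mulmx_sum_row {1}(row_sum_delta x).
have f0 := lin0 H.
have fD : {morph f : a b / a + b}.
  by move=> a b; rewrite -[a]scale1r H !scale1r.
rewrite (@big_morph _ _ f 0 +%R 0 +%R fD f0).
apply: eq_bigr => i _; rewrite rowK.
by have := H (x 0 i) (delta_mx 0 i) 0; rewrite f0 !addr0 => ->.
Qed.

Lemma pairE (xi x : V) : pair xi x = (xi *m x^T) 0 0.
Proof. by rewrite /pair mxE; apply: eq_bigr => i _; rewrite mxE. Qed.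

Lemma dualmapE (f : V -> V) : lin f -> forall xi, dualmap f xi = xi *m (mxof f)^T.
Proof.
move=> H xi; apply/rowP => a; rewrite !mxE pairE /ebas (lin_mx H) -rowE.
by rewrite mxE; apply: eq_bigr => j _; rewrite !mxE.
Qed.

Lemma pair_dual (f : V -> V) : lin f -> forall xi y, pair (dualmap f xi) y = pair xi (f y).
Proof.
by move=> H xi y; rewrite (dualmapE H) (lin_mx H) !pairE trmx_mul mulmxA.
Qed.

Lemma adstar_dual (br : V -> V -> V) (x xi : V) : lin (br x) ->
  forall y, pair (adstar br x xi) y = - pair xi (br x y).
Proof.
move=> H y; have -> : adstar br x xi = - dualmap (br x) xi.
  by apply/rowP => a; rewrite !mxE.
by rewrite -(pair_dual H) !pairE mulNmx mxE.
Qed.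

Lemma mxof_id : mxof (@id V) = 1%:M.
Proof.
apply/matrixP => i j; rewrite !mxE /ebas /=.
by rewrite eq_sym.
Qed.

Lemma tmapE (f g : V -> V) (t : 'M[K]_n) : lin f -> lin g ->
  tmap f g t = (mxof f)^T *m t *m mxof g.
Proof.
move=> Hf Hg; apply/matrixP => a b.
rewrite /tmap summxE mxE.
under eq_bigr => i _ do rewrite summxE.
under [RHS]eq_bigr => j _ do rewrite mxE big_distrl /=.
rewrite exchange_big /=; apply: eq_bigr => i _; apply: eq_bigr => j _.
rewrite !mxE.
by rewrite mulrA [_ * t j i]mulrC.
Qed.

End Aux.

Theorem proposition7p17 (K : fieldType) (n : nat) (br : 'rV[K]_n -> 'rV[K]_n -> 'rV[K]_n)
  (r1 r2 : 'M[K]_n) (phi vphi : 'rV[K]_n -> 'rV[K]_n) :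
  is_lie br -> r_matrix br r1 -> r_matrix br r2 ->
  (weak_hom_r br r1 r2 phi vphi -> weak_hom_bialg br r1 r2 phi vphi) /\
  (weak_iso_r br r1 r2 phi vphi -> weak_iso_bialg br r1 r2 phi vphi).
Proof.
move=> [_ brR _ _] _ _.
have key : weak_hom_r br r1 r2 phi vphi -> weak_hom_bialg br r1 r2 phi vphi.
  move=> [[Lphi Hphi] Lv Ht Hc]; split => //.
  have lin_id : lin (@id 'rV[K]_n) by [].
  rewrite (tmapE _ Lv lin_id) (tmapE _ lin_id Lphi) mxof_id trmx1 mulmx1 mul1mx in Ht.
  have Hs : forall xi, rsharp r1 (dualmap vphi xi) = phi (rsharp r2 xi).
    by move=> xi; rewrite /rsharp (dualmapE Lv) (lin_mx Lphi) -mulmxA Ht mulmxA.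
  have Had : forall x eta, dualmap vphi (adstar br x eta)
                           = adstar br (phi x) (dualmap vphi eta).
    move=> x eta; apply/rowP => a; rewrite !mxE (adstar_dual _ (brR _)).
    by rewrite (pair_dual Lv) Hc.
  split.
    by move=> a x y; rewrite !(dualmapE Lv) mulmxDl scalemxAl.
  move=> xi eta; rewrite /rbr !(dualmapE Lv) mulmxBl -!(dualmapE Lv).
  by rewrite !Had !Hs.
split => // -[H B1 B2]; split => //; exact: key.
Qed.
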